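(* Consider two runs $k=1,2$ of the dual opinions dynamics described in the context. Run $k$ takes place on an $(n,n,p_s^{(k)},p_d^{(k)})$-two-island network with groups $V_1,V_2$ and degree of homophily $h^{(k)}=p_s^{(k)}/p_d^{(k)}$, with common resilience $\phi^{(k)}\in(0,1)$, common bias parameter $b^{(k)}>0$, and the symmetric initial condition $x_i^{(k)}(0)=x_0\in(\tfrac12,1)$, $y_i^{(k)}(0)=y_0^{(k)}\in[\tfrac12,x_0]$ for $i\in V_1$ and $x_j^{(k)}(0)=1-x_0$, $y_j^{(k)}(0)=1-y_0^{(k)}$ for $j\in V_2$ (in particular both runs have the same initial implicit opinions). Suppose $y_0^{(1)}>y_0^{(2)}$, $\phi^{(1)}>\phi^{(2)}$, $b^{(1)}>b^{(2)}$ and $h^{(1)}>h^{(2)}$. Then for every $t>0$ and every $i\in V_1$, $$x_i^{(1)}(t)\ge x_i^{(2)}(t)\quad\text{and}\quad y_i^{(1)}(t)\ge y_i^{(2)}(t).$$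
   Context: Let $n\ge 1$ and $p_s,p_d\in(0,1)$ with $p_s>p_d$ and $np_s,np_d$ positive integers. An $(n,n,p_s,p_d)$-two-island network is an undirected graph (no self-loops) with vertex set $V=V_1\cup V_2$, $V_1\cap V_2=\emptyset$, $|V_1|=|V_2|=n$, such that each node of $V_1$ has exactly $np_s$ neighbours in $V_1$ and $np_d$ neighbours in $V_2$, and each node of $V_2$ has exactly $np_s$ neighbours in $V_2$ and $np_d$ neighbours in $V_1$. Its degree of homophily is $p_s/p_d>1$. Let $w_{ij}\in\{0,1\}$ be the adjacency matrix, $N_i$ the set of neighbours of $i$, and $d_i=\sum_{j\in N_i}w_{ij}$. Dual opinions dynamics with parameters $b>0$, $\phi\in(0,1)$: each individual $i\in V$ has an implicit opinion $x_i(t)\in[0,1]$ and an explicit opinion $y_i(t)\in[0,1]$, $t=0,1,2,\dots$, updated by $$x_i(t+1)=\frac{x_i(t)^{b}s_i(t)}{x_i(t)^{b}s_i(t)+(1-x_i(t))^{b}(d_i-s_i(t))},\qquad y_i(t+1)=\phi\, x_i(t+1)+(1-\phi)\hat y_{i,avg}(t),$$ where $s_i(t)=\sum_{j\in N_i}w_{ij}y_j(t)$ and $\hat y_{i,avg}(t)=\sum_{j\in N_i}\frac{w_{ij}}{d_i}y_j(t)$. *)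

(* Defs.v *)
From HB Require Import structures.
From mathcomp Require Import all_boot all_order all_algebra.
From mathcomp Require Import reals exp.
Set Implicit Arguments. Unset Strict Implicit. Unset Printing Implicit Defensive.
Import Order.TTheory GRing.Theory Num.Theory.
Local Open Scope ring_scope.

Section DualOpinions.
Variable R : realType.
Variable V : finType.

Definition nbrs (e : rel V) (i : V) : {set V} := [set j | e i j].

Definition deg (e : rel V) (i : V) : R := (#|nbrs e i|)%:R.

Definition ssum (e : rel V) (y : V -> R) (i : V) : R := \sum_(j in nbrs e i) y j.

Definition two_island (n : nat) (ps pd : R) (V1 V2 : {set V}) (e : rel V) : Prop :=
  [/\ symmetric e, irreflexive e,
      [/\ V1 :&: V2 = set0, V1 :|: V2 = [set: V], #|V1| = n & #|V2| = n],
      (forall i, i \in V1 ->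
         (#|V1 :&: nbrs e i|)%:R = n%:R * ps /\ (#|V2 :&: nbrs e i|)%:R = n%:R * pd)
    & (forall i, i \in V2 ->
         (#|V2 :&: nbrs e i|)%:R = n%:R * ps /\ (#|V1 :&: nbrs e i|)%:R = n%:R * pd)].

Definition step (b phi : R) (e : rel V) (xy : (V -> R) * (V -> R)) : (V -> R) * (V -> R) :=
  let x := xy.1 in let y := xy.2 in
  let x' := fun i =>
    (powR (x i) b * ssum e y i) /
    (powR (x i) b * ssum e y i + powR (1 - x i) b * (deg e i - ssum e y i)) in
  (x', fun i => phi * x' i + (1 - phi) * (ssum e y i / deg e i)).

Definition traj (b phi : R) (e : rel V) (x0 y0 : V -> R) (t : nat) : (V -> R) * (V -> R) :=
  iter t (step b phi e) (x0, y0).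

End DualOpinions.

(* Main.v *)
Require Import Defs.
From HB Require Import structures.
From mathcomp Require Import all_boot all_order all_algebra.
From mathcomp Require Import reals exp.
From mathcomp Require Import ring lra.
Import Order.TTheory GRing.Theory Num.Theory.
Local Open Scope ring_scope.

Section All.
Context {R : realType} {V : finType}.

Lemma powR_leb (x y r : R) : 0 <= x -> x <= y -> 0 <= r -> powR x r <= powR y r.
Proof.
move=> x0 xy r0; apply: (ge0_ler_powR r0); rewrite ?nnegrE //.
exact: le_trans xy.
Qed.

Lemma key_pow (X1 X2 b1 b2 : R) : 0 <= X2 -> X2 <= X1 -> X1 <= 1 -> 1 - X1 <= X1 ->
  0 <= b2 -> b2 <= b1 -> 0 < b1 ->
  powR X2 b2 * powR (1 - X1) b1 <= powR X1 b1 * powR (1 - X2) b2.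
Proof.
move=> h0 h1 h2 h3 hb2 hb hb1.
have pD : forall x : R, powR x b1 = powR x b2 * powR x (b1 - b2).
  move=> x; have E : b1 = b2 + (b1 - b2) by ring.
  by rewrite {1}E powRD // -E gt_eqF.
rewrite !pD.
have r0 : 0 <= b1 - b2 by lra.
have k1 : powR (1 - X1) (b1 - b2) <= powR X1 (b1 - b2) by apply: powR_leb => //; lra.
have k2 : powR X2 b2 * powR (1 - X1) b2 <= powR X1 b2 * powR (1 - X2) b2.
  rewrite -!powRM; try lra.
  apply: powR_leb => //; first by nra.
  nra.
have := ler_pM (mulr_ge0 (powR_ge0 _ _) (powR_ge0 _ _)) (powR_ge0 _ _) k2 k1.
move=> H; apply: le_trans (le_trans H _).
  by rewrite le_eqVlt; apply/orP; left; apply/eqP; ring.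
by rewrite le_eqVlt; apply/orP; left; apply/eqP; ring.
Qed.

Lemma le_div2 (a b c d : R) : 0 < c -> 0 < d -> a * d <= b * c -> a / c <= b / d.
Proof. by move=> c0 d0 h; rewrite ler_pdivlMr // mulrAC ler_pdivrMr. Qed.

Definition s1 (P Q Y : R) := P * Y + Q * (1 - Y).
Definition s2 (P Q Y : R) := P * (1 - Y) + Q * Y.
Definition FX (b P Q X Y : R) :=
  powR X b * s1 P Q Y / (powR X b * s1 P Q Y + powR (1 - X) b * s2 P Q Y).
Definition F (b phi P Q : R) (p : R * R) : R * R :=
  (FX b P Q p.1 p.2, phi * FX b P Q p.1 p.2 + (1 - phi) * (s1 P Q p.2 / (P + Q))).
Definition Inv (p : R * R) := 2^-1 <= p.2 /\ p.2 <= p.1 /\ p.1 <= 1.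

Lemma FX_bounds b P Q X Y : 0 < Q -> Q < P -> 0 < b -> Inv (X, Y) ->
  s1 P Q Y / (P + Q) <= FX b P Q X Y /\ FX b P Q X Y <= 1 /\
  2^-1 <= s1 P Q Y / (P + Q) /\ 0 < powR X b * s1 P Q Y + powR (1 - X) b * s2 P Q Y.
Proof.
move=> q0 qp b0 [/= h1 [h2 h3]].
have A0 : 0 < powR X b by apply: powR_gt0; lra.
have AB : powR (1 - X) b <= powR X b by apply: powR_leb; lra.
have B0 : 0 <= powR (1 - X) b by apply: powR_ge0.
have t0 : 0 <= s2 P Q Y by rewrite /s2; nra.
have st : s2 P Q Y <= s1 P Q Y by rewrite /s1 /s2; nra.
have sd : s1 P Q Y + s2 P Q Y = P + Q by rewrite /s1 /s2; ring.
have s0 : 0 < s1 P Q Y by lra.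
have D0 : 0 < powR X b * s1 P Q Y + powR (1 - X) b * s2 P Q Y.
  by have := mulr_gt0 A0 s0; have := mulr_ge0 B0 t0; lra.
rewrite /FX; split; last split; last split => //.
- apply: le_div2; [lra|done|].
  have e : 0 <= s1 P Q Y * s2 P Q Y * (powR X b - powR (1 - X) b) by apply: mulr_ge0; [apply: mulr_ge0; lra|lra].
  rewrite -sd; nra.
- by rewrite ler_pdivrMr // mul1r lerDl; apply: mulr_ge0.
- rewrite -[2^-1]mul1r; apply: le_div2; [lra|lra|].
  rewrite -sd; lra.
Qed.

Lemma Inv_F b phi P Q p : 0 < Q -> Q < P -> 0 < b -> 0 < phi < 1 -> Inv p -> Inv (F b phi P Q p).
Proof.
move=> q0 qp b0 hphi hI; case: p hI => X Y hI.
have [h1 [h2 [h3 _]]] := FX_bounds _ _ _ _ _ q0 qp b0 hI.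
rewrite /Inv /F /=; split; [nra|split; [nra|done]].
Qed.

Lemma F_mono b1 b2 phi1 phi2 P1 Q1 P2 Q2 p1 p2 :
  0 < Q1 -> Q1 < P1 -> 0 < Q2 -> Q2 < P2 -> P2 * Q1 <= P1 * Q2 ->
  0 < b2 -> b2 <= b1 -> 0 < phi2 < 1 -> 0 < phi1 < 1 -> phi2 <= phi1 ->
  Inv p1 -> Inv p2 -> p2.1 <= p1.1 -> p2.2 <= p1.2 ->
  (F b2 phi2 P2 Q2 p2).1 <= (F b1 phi1 P1 Q1 p1).1 /\
  (F b2 phi2 P2 Q2 p2).2 <= (F b1 phi1 P1 Q1 p1).2.
Proof.
move=> q1 qp1 q2 qp2 hPQ b20 hb hphi2 hphi1 hphi.
case: p1 => X1 Y1; case: p2 => X2 Y2 hI1 hI2 /= hX hY.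
have b10 : 0 < b1 by lra.
have [f1 [g1 [k1 D1]]] := FX_bounds _ _ _ _ _ q1 qp1 b10 hI1.
have [f2 [g2 [k2 D2]]] := FX_bounds _ _ _ _ _ q2 qp2 b20 hI2.
case: hI1 => /= [i1 [i2 i3]]; case: hI2 => /= [j1 [j2 j3]].
have hS : s1 P2 Q2 Y2 * (P1 + Q1) <= s1 P1 Q1 Y1 * (P2 + Q2).
  rewrite /s1.
  have e1 : 0 <= (P1 - Q1) * (Y1 - Y2) * (P2 + Q2) by apply: mulr_ge0; nra.
  have e2 : 0 <= (2 * Y2 - 1) * (P1 * Q2 - P2 * Q1) by apply: mulr_ge0; lra.
  nra.
have hFX : FX b2 P2 Q2 X2 Y2 <= FX b1 P1 Q1 X1 Y1.
  rewrite /FX; apply: le_div2 => //.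
  have X20 : 0 <= X2 by lra.
  have X1h : 1 - X1 <= X1 by lra.
  have kp2 := key_pow X1 X2 b1 b2 X20 hX i3 X1h (ltW b20) hb b10.
  have sd1 : s1 P1 Q1 Y1 + s2 P1 Q1 Y1 = P1 + Q1 by rewrite /s1 /s2; ring.
  have sd2 : s1 P2 Q2 Y2 + s2 P2 Q2 Y2 = P2 + Q2 by rewrite /s1 /s2; ring.
  have st : s1 P2 Q2 Y2 * s2 P1 Q1 Y1 <= s1 P1 Q1 Y1 * s2 P2 Q2 Y2.
    have -> : s2 P1 Q1 Y1 = P1 + Q1 - s1 P1 Q1 Y1 by lra.
    have -> : s2 P2 Q2 Y2 = P2 + Q2 - s1 P2 Q2 Y2 by lra.
    nra.
  have t1 : 0 <= s2 P1 Q1 Y1 by rewrite /s2; nra.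
  have t2 : 0 <= s1 P2 Q2 Y2 by rewrite /s1; nra.
  have H := ler_pM (mulr_ge0 (powR_ge0 _ _) (powR_ge0 _ _)) (mulr_ge0 t2 t1) kp2 st.
  nra.
split => //=.
have hS' : s1 P2 Q2 Y2 / (P2 + Q2) <= s1 P1 Q1 Y1 / (P1 + Q1) by apply: le_div2 => //; lra.
nra.
Qed.

End All.

Section G.
Context {R : realType} {V : finType}.
Definition symf (V1 : {set V}) (X : R) : V -> R := fun i => if i \in V1 then X else 1 - X.

Lemma compl_in (V1 V2 : {set V}) : V1 :&: V2 = set0 -> V1 :|: V2 = [set: V] ->
  forall j, (j \in V2) = (j \notin V1).
Proof.
move=> hI hU j; have := congr1 (fun A : {set V} => j \in A) hI; have := congr1 (fun A : {set V} => j \in A) hU.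
by rewrite !inE /=; case: (j \in V1); case: (j \in V2).
Qed.
Arguments compl_in {V1 V2}.

Lemma sum_split (V1 V2 : {set V}) (e : rel V) (f : V -> R) (i : V) :
  V1 :&: V2 = set0 -> V1 :|: V2 = [set: V] ->
  \sum_(j in nbrs e i) f j = \sum_(j in V1 :&: nbrs e i) f j + \sum_(j in V2 :&: nbrs e i) f j.
Proof.
move=> hI hU; rewrite (bigID (fun j => j \in V1)) /=; congr (_ + _).
  by apply: eq_bigl => j; rewrite !inE andbC.
by apply: eq_bigl => j; rewrite !inE (compl_in hI hU) andbC.
Qed.
Arguments sum_split {V1 V2 e f i}.

Lemma ssum_sym n (ps pd : R) (V1 V2 : {set V}) (e : rel V) (Y : R) (i : V) : two_island n ps pd V1 V2 e ->
  ssum e (symf V1 Y) i =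
  (if i \in V1 then s1 (n%:R * ps) (n%:R * pd) Y else s2 (n%:R * ps) (n%:R * pd) Y) /\
  deg R e i = n%:R * ps + n%:R * pd.
Proof.
case=> _ _ [hI hU _ _] h1 h2.
have hc : #|nbrs e i| = (#|V1 :&: nbrs e i| + #|V2 :&: nbrs e i|)%N.
  rewrite -(cardsID V1 (nbrs e i)) setIC; congr (_ + _)%N.
  by apply: eq_card => j; rewrite !inE (compl_in hI hU) andbC.
have hd : deg R e i = #|V1 :&: nbrs e i|%:R + #|V2 :&: nbrs e i|%:R.
  by rewrite /deg hc natrD.
rewrite /ssum (sum_split hI hU).
rewrite (eq_bigr (fun _ => Y)); last by move=> j; rewrite !inE /symf => /andP[-> _].
rewrite [X in _ + X](eq_bigr (fun _ => 1 - Y)); last first.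
  by move=> j; rewrite !inE (compl_in hI hU) /symf => /andP[/negbTE -> _].
rewrite !sumr_const -[Y *+ _]mulr_natr -[(1 - Y) *+ _]mulr_natr hd.
case: (boolP (i \in V1)) => hi.
  by have [-> ->] := h1 i hi; rewrite /s1; split; ring.
have hi2 : i \in V2 by rewrite (compl_in hI hU).
by have [-> ->] := h2 i hi2; rewrite /s2; split; ring.
Qed.


Lemma alg2 (A B s t : R) : 0 < A * s + B * t ->
  B * t / (B * t + A * s) = 1 - A * s / (A * s + B * t).
Proof.
move=> D0; have D1 : A * s + B * t != 0 by apply: lt0r_neq0.
rewrite [B * t + _]addrC; field.
exact: D1.
Qed.

Lemma step_sym n (ps pd : R) (V1 V2 : {set V}) (e : rel V) (b phi X Y : R)
    (xy : (V -> R) * (V -> R)) :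
  two_island n ps pd V1 V2 e -> 0 < pd -> pd < ps -> (1 <= n)%N -> 0 < b -> Inv (X, Y) ->
  (forall i, xy.1 i = symf V1 X i) -> (forall i, xy.2 i = symf V1 Y i) ->
  (forall i, (step b phi e xy).1 i = symf V1 (F b phi (n%:R * ps) (n%:R * pd) (X, Y)).1 i) /\
  (forall i, (step b phi e xy).2 i = symf V1 (F b phi (n%:R * ps) (n%:R * pd) (X, Y)).2 i).
Proof.
move=> hnet pd0 pdps n1 b0 hI hx hy.
have n0 : 0 < n%:R :> R by rewrite ltr0n.
have Q0 : 0 < n%:R * pd by apply: mulr_gt0.
have QP : n%:R * pd < n%:R * ps by rewrite ltr_pM2l.
have [_ [_ [_ D0]]] := FX_bounds b (n%:R * ps) (n%:R * pd) X Y Q0 QP b0 hI.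
have hs : forall i, ssum e xy.2 i = ssum e (symf V1 Y) i.
  by move=> i; apply: eq_bigr => j _; exact: hy.
have PQ0 : n%:R * ps + n%:R * pd != 0 by apply: lt0r_neq0; lra.
have e1 : n%:R * ps + n%:R * pd - s1 (n%:R * ps) (n%:R * pd) Y = s2 (n%:R * ps) (n%:R * pd) Y.
  by rewrite /s1 /s2; ring.
have e2 : n%:R * ps + n%:R * pd - s2 (n%:R * ps) (n%:R * pd) Y = s1 (n%:R * ps) (n%:R * pd) Y.
  by rewrite /s1 /s2; ring.
have e3 : 1 - (1 - X) = X by ring.
have e4 : s2 (n%:R * ps) (n%:R * pd) Y = n%:R * ps + n%:R * pd - s1 (n%:R * ps) (n%:R * pd) Y.
  by rewrite -e1.
split => i; rewrite /step /= hx hs; have [hs' hd] := ssum_sym n ps pd V1 V2 e Y i hnet;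
  rewrite hs' hd /symf /F /FX /=; case: (i \in V1); rewrite ?e1 ?e2 ?e3 //.
- by rewrite alg2.
- rewrite alg2 // e4; field.
  by rewrite PQ0 /= -e4; apply: lt0r_neq0.
Qed.

Lemma iter_Inv b phi P Q (p : R * R) t : 0 < Q -> Q < P -> 0 < b -> 0 < phi < 1 -> Inv p ->
  Inv (iter t (F b phi P Q) p).
Proof.
move=> q0 qp b0 hphi hp; elim: t => [|t IH] //=.
exact: Inv_F.
Qed.

Lemma traj_sym n (ps pd : R) (V1 V2 : {set V}) (e : rel V) (b phi X0 Y0 : R)
    (x0f y0f : V -> R) :
  two_island n ps pd V1 V2 e -> 0 < pd -> pd < ps -> (1 <= n)%N -> 0 < b -> 0 < phi < 1 ->
  Inv (X0, Y0) ->
  (forall i, x0f i = symf V1 X0 i) -> (forall i, y0f i = symf V1 Y0 i) ->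
  forall t,
  (forall i, (traj b phi e x0f y0f t).1 i =
     symf V1 (iter t (F b phi (n%:R * ps) (n%:R * pd)) (X0, Y0)).1 i) /\
  (forall i, (traj b phi e x0f y0f t).2 i =
     symf V1 (iter t (F b phi (n%:R * ps) (n%:R * pd)) (X0, Y0)).2 i).
Proof.
move=> hnet pd0 pdps n1 b0 hphi hI0 hx hy.
have n0 : 0 < n%:R :> R by rewrite ltr0n.
have Q0 : 0 < n%:R * pd by apply: mulr_gt0.
have QP : n%:R * pd < n%:R * ps by rewrite ltr_pM2l.
elim=> [|t [IH1 IH2]]; first by split.
have hI := iter_Inv b phi _ _ (X0, Y0) t Q0 QP b0 hphi hI0.
set q := iter t _ (X0, Y0) in IH1 IH2 hI *.
exact: (step_sym n ps pd V1 V2 e b phi q.1 q.2 (traj b phi e x0f y0f t) hnet pd0 pdps n1 b0 hI IH1 IH2).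
Qed.

Lemma iter_cmp b1 b2 phi1 phi2 P1 Q1 P2 Q2 (p1 p2 : R * R) t :
  0 < Q1 -> Q1 < P1 -> 0 < Q2 -> Q2 < P2 -> P2 * Q1 <= P1 * Q2 ->
  0 < b2 -> b2 <= b1 -> 0 < phi2 < 1 -> 0 < phi1 < 1 -> phi2 <= phi1 ->
  Inv p1 -> Inv p2 -> p2.1 <= p1.1 -> p2.2 <= p1.2 ->
  (iter t (F b2 phi2 P2 Q2) p2).1 <= (iter t (F b1 phi1 P1 Q1) p1).1 /\
  (iter t (F b2 phi2 P2 Q2) p2).2 <= (iter t (F b1 phi1 P1 Q1) p1).2.
Proof.
move=> q1 qp1 q2 qp2 hPQ b20 hb hphi2 hphi1 hphi hI1 hI2 hx hy.
have b10 : 0 < b1 by lra.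
elim: t => [|t [IH1 IH2]] //=.
apply: F_mono => //; exact: iter_Inv.
Qed.
End G.

Theorem theorem5 (R : realType) (V : finType) (n : nat) (V1 V2 : {set V})
    (ps1 pd1 ps2 pd2 phi1 phi2 b1 b2 x0 y01 y02 : R) (e1 e2 : rel V)
    (hn : (1 <= n)%N)
    (hps1 : 0 < ps1 < 1) (hpd1 : 0 < pd1 < 1) (hpsd1 : pd1 < ps1)
    (hps2 : 0 < ps2 < 1) (hpd2 : 0 < pd2 < 1) (hpsd2 : pd2 < ps2)
    (hint1 : exists ms md : nat, (0 < ms)%N /\ (0 < md)%N /\
                n%:R * ps1 = ms%:R /\ n%:R * pd1 = md%:R)
    (hint2 : exists ms md : nat, (0 < ms)%N /\ (0 < md)%N /\
                n%:R * ps2 = ms%:R /\ n%:R * pd2 = md%:R)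
    (hnet1 : two_island n ps1 pd1 V1 V2 e1)
    (hnet2 : two_island n ps2 pd2 V1 V2 e2)
    (hphi1 : 0 < phi1 < 1) (hphi2 : 0 < phi2 < 1)
    (hb1 : 0 < b1) (hb2 : 0 < b2)
    (hx0 : 2^-1 < x0 < 1)
    (hy01 : 2^-1 <= y01 <= x0) (hy02 : 2^-1 <= y02 <= x0)
    (hy : y02 < y01) (hphi : phi2 < phi1) (hb : b2 < b1)
    (hh : ps2 / pd2 < ps1 / pd1) :
  let xinit := fun i : V => if i \in V1 then x0 else 1 - x0 in
  let yinit1 := fun i : V => if i \in V1 then y01 else 1 - y01 in
  let yinit2 := fun i : V => if i \in V1 then y02 else 1 - y02 in
  forall (t : nat) (i : V), (0 < t)%N -> i \in V1 ->
    (traj b2 phi2 e2 xinit yinit2 t).1 i <= (traj b1 phi1 e1 xinit yinit1 t).1 i /\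
    (traj b2 phi2 e2 xinit yinit2 t).2 i <= (traj b1 phi1 e1 xinit yinit1 t).2 i.
Proof.
move=> xinit yinit1 yinit2 t i _ hi.
case/andP: hpd1 => pd10 _; case/andP: hpd2 => pd20 _.
have n0 : 0 < n%:R :> R by rewrite ltr0n.
have I1 : Inv (x0, y01) by rewrite /Inv /=; lra.
have I2 : Inv (x0, y02) by rewrite /Inv /=; lra.
have [S1x S1y] := traj_sym n ps1 pd1 V1 V2 e1 b1 phi1 x0 y01 xinit yinit1 hnet1 pd10 hpsd1 hn hb1 hphi1 I1
   (fun _ => erefl) (fun _ => erefl) t.
have [S2x S2y] := traj_sym n ps2 pd2 V1 V2 e2 b2 phi2 x0 y02 xinit yinit2 hnet2 pd20 hpsd2 hn hb2 hphi2 I2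
   (fun _ => erefl) (fun _ => erefl) t.
rewrite S1x S1y S2x S2y /symf hi.
have Q10 : 0 < n%:R * pd1 by apply: mulr_gt0.
have Q20 : 0 < n%:R * pd2 by apply: mulr_gt0.
have QP1 : n%:R * pd1 < n%:R * ps1 by rewrite ltr_pM2l.
have QP2 : n%:R * pd2 < n%:R * ps2 by rewrite ltr_pM2l.
have hh' : ps2 * pd1 <= ps1 * pd2.
  by apply: ltW; move: hh; rewrite ltr_pdivrMr // mulrAC ltr_pdivlMr.
have hPQ : n%:R * ps2 * (n%:R * pd1) <= n%:R * ps1 * (n%:R * pd2).
  have nn : 0 < n%:R * n%:R :> R by apply: mulr_gt0.
  have -> : n%:R * ps2 * (n%:R * pd1) = (n%:R * n%:R) * (ps2 * pd1) by ring.
  have -> : n%:R * ps1 * (n%:R * pd2) = (n%:R * n%:R) * (ps1 * pd2) by ring.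
  by rewrite ler_pM2l.
apply: iter_cmp => //=; lra.
Qed.
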